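(* Let $T$ be a complete affine $L$-theory and let $M\models T$ be compact (as a metric space). Then every extreme type $p\in E_n(T)$ is realized in $M$.
   Context: Affine continuous logic: structures are complete metric spaces of diameter $\le1$ with Lipschitz interpretations; affine formulas built from atomic $1,d(t_1,t_2),R(\bar t)$ by $+$, real scalars, $\sup$, $\inf$. An $n$-type of $T$ is a positive linear functional $p$ with $p(1)=1$ on the space of affine formulas in $n$ free variables modulo $T$-equivalence (ordered by $0\le\phi$ iff $T\models0\le\inf_{\bar x}\phi$); $K_n(T)$ is the compact convex set of $n$-types, $E_n(T)$ its set of extreme points. $\bar a\in M$ realizes $p$ if $p(\phi)=\phi^M(\bar a)$ for all $\phi$. *)

(* Defs.v *)
From Stdlib Require Import Reals List.
From Stdlib Require Fin.
From Coquelicot Require Import Rbar Lub.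
Open Scope R_scope.

(** A (metric) language: function and relation symbols with arities and
    Lipschitz constants (with respect to the max metric on M^k). *)
Record language : Type := {
  fsym : Type;
  farity : fsym -> nat;
  flip : fsym -> R;
  rsym : Type;
  rarity : rsym -> nat;
  rlip : rsym -> R
}.

Section Syntax.
Variable L : language.

Inductive term (n : nat) : Type :=
| tvar : Fin.t n -> term n
| tapp : forall f : fsym L, (Fin.t (farity L f) -> term n) -> term n.

(** Affine formulas with free variables among x_0, ..., x_{n-1}:
    built from 1, d(t1,t2), R(t) by +, real scalars, sup, inf.
    The quantifiers bind the new variable (index Fin.F1). *)
Inductive formula : nat -> Type :=
| fone : forall n, formula n
| fdist : forall n, term n -> term n -> formula n
| frel : forall n (P : rsym L), (Fin.t (rarity L P) -> term n) -> formula n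
| fadd : forall n, formula n -> formula n -> formula n
| fscale : forall n, R -> formula n -> formula n
| fsup : forall n, formula (S n) -> formula n
| finf : forall n, formula (S n) -> formula n.

End Syntax.

Arguments tvar {L n}.
Arguments tapp {L n}.
Arguments fone {L n}.
Arguments fdist {L n}.
Arguments frel {L n}.
Arguments fadd {L n}.
Arguments fscale {L n}.
Arguments fsup {L n}.
Arguments finf {L n}.

Definition cauchy {M : Type} (d : M -> M -> R) (u : nat -> M) : Prop :=
  forall eps, 0 < eps -> exists N, forall m k, (N <= m)%nat -> (N <= k)%nat ->
    d (u m) (u k) < eps.

Definition converges_to {M : Type} (d : M -> M -> R) (u : nat -> M) (x : M) : Prop :=
  forall eps, 0 < eps -> exists N, forall m, (N <= m)%nat -> d (u m) x < eps.

Record structure (L : language) : Type := {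
  carrier :> Type;
  point : carrier;                         (* structures are nonempty *)
  dist : carrier -> carrier -> R;
  dist_nonneg : forall x y, 0 <= dist x y;
  dist_eq0 : forall x y, dist x y = 0 <-> x = y;
  dist_sym : forall x y, dist x y = dist y x;
  dist_tri : forall x y z, dist x z <= dist x y + dist y z;
  dist_diam : forall x y, dist x y <= 1;
  complete : forall u : nat -> carrier, cauchy dist u ->
               exists x, converges_to dist u x;
  finterp : forall f : fsym L, (Fin.t (farity L f) -> carrier) -> carrier;
  rinterp : forall P : rsym L, (Fin.t (rarity L P) -> carrier) -> R;
  finterp_lip : forall f a b delta,
      (forall i, dist (a i) (b i) <= delta) ->
      dist (finterp f a) (finterp f b) <= flip L f * delta;
  rinterp_lip : forall P a b delta,
      (forall i, dist (a i) (b i) <= delta) ->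
      Rabs (rinterp P a - rinterp P b) <= rlip L P * delta
}.

Arguments point {L}.
Arguments dist {L}.
Arguments finterp {L}.
Arguments rinterp {L}.

Definition metric_open {L} (M : structure L) (U : M -> Prop) : Prop :=
  forall x, U x -> exists eps, 0 < eps /\ forall y, dist M x y < eps -> U y.

Definition compact_structure {L} (M : structure L) : Prop :=
  forall (I : Type) (U : I -> M -> Prop),
    (forall i, metric_open M (U i)) ->
    (forall x, exists i, U i x) ->
    exists l : list I, forall x : M, exists i, In i l /\ U i x.

(** Supremum of a real function over a nonempty set (it is bounded for
    every function arising as the value of a formula). *)
Definition supR {M : Type} (f : M -> R) : R :=
  real (Lub_Rbar (fun r => exists x, r = f x)).
Definition infR {M : Type} (f : M -> R) : R := - supR (fun x => - f x).

Definition scons {M : Type} {n : nat} (x : M) (a : Fin.t n -> M) : Fin.t (S n) -> M :=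
  fun i => Fin.caseS' i (fun _ => M) x a.

Section Semantics.
Variables (L : language) (M : structure L).

Fixpoint teval {n} (a : Fin.t n -> M) (t : term L n) : M :=
  match t with
  | tvar i => a i
  | tapp f args => finterp M f (fun i => teval a (args i))
  end.

Fixpoint eval {n} (phi : formula L n) : (Fin.t n -> M) -> R :=
  match phi in formula _ k return (Fin.t k -> M) -> R with
  | fone _ => fun _ => 1
  | fdist _ t1 t2 => fun a => dist M (teval a t1) (teval a t2)
  | frel _ P args => fun a => rinterp M P (fun i => teval a (args i))
  | fadd _ phi1 phi2 => fun a => eval phi1 a + eval phi2 a
  | fscale _ r phi1 => fun a => r * eval phi1 a
  | fsup _ phi1 => fun a => supR (fun x : M => eval phi1 (scons x a))
  | finf _ phi1 => fun a => infR (fun x : M => eval phi1 (scons x a))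
  end.

End Semantics.

Arguments teval {L} M {n}.
Arguments eval {L} M {n}.

Definition sentence (L : language) := formula L 0.

Definition empty_assignment {M : Type} : Fin.t 0 -> M :=
  fun i => Fin.case0 (fun _ => M) i.

Definition sent_value {L} (M : structure L) (phi : sentence L) : R :=
  eval M phi empty_assignment.

(** An affine theory is a set of conditions "0 <= phi", phi a sentence. *)
Definition theory (L : language) := sentence L -> Prop.

Definition models {L} (M : structure L) (T : theory L) : Prop :=
  forall phi, T phi -> 0 <= sent_value M phi.

Definition complete_theory {L} (T : theory L) : Prop :=
  (exists M : structure L, models M T) /\
  forall phi : sentence L, exists r : R,
    forall M : structure L, models M T -> sent_value M phi = r.

Definition T_nonneg {L} (T : theory L) {n} (phi : formula L n) : Prop :=
  forall M : structure L, models M T -> forall a : Fin.t n -> M, 0 <= eval M phi a.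

Definition T_equiv {L} (T : theory L) {n} (phi psi : formula L n) : Prop :=
  forall M : structure L, models M T -> forall a : Fin.t n -> M,
    eval M phi a = eval M psi a.

(** An n-type of T: a positive linear functional p with p(1) = 1 on the space
    of affine formulas in n variables modulo T-equivalence, represented as a
    function on formulas that is constant on T-equivalence classes. *)
Record is_type {L} (T : theory L) (n : nat) (p : formula L n -> R) : Prop := {
  type_equiv : forall phi psi, T_equiv T phi psi -> p phi = p psi;
  type_add : forall phi psi, p (fadd phi psi) = p phi + p psi;
  type_scale : forall r phi, p (fscale r phi) = r * p phi;
  type_pos : forall phi, T_nonneg T phi -> 0 <= p phi;
  type_one : p fone = 1
}.

Definition extreme_type {L} (T : theory L) (n : nat) (p : formula L n -> R) : Prop :=
  is_type T n p /\
  forall (q1 q2 : formula L n -> R) (t : R),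
    is_type T n q1 -> is_type T n q2 -> 0 < t < 1 ->
    (forall phi, p phi = t * q1 phi + (1 - t) * q2 phi) ->
    forall phi, q1 phi = p phi /\ q2 phi = p phi.

Definition realizes {L} (M : structure L) {n} (a : Fin.t n -> M) (p : formula L n -> R) : Prop :=
  forall phi : formula L n, p phi = eval M phi a.

(* Main.v *)
Require Import Defs.
From Stdlib Require Import Reals Lra Psatz List Bool FunctionalExtensionality ClassicalEpsilon Classical.
From Coquelicot Require Import Rbar Lub.
From mathcomp Require classical_sets boolp.
Set Bullet Behavior "Strict Subproofs".
Unset Asymmetric Patterns.
Open Scope R_scope.

Lemma zorn_pre (T : Type) (t0 : T) (R : T -> T -> Prop) :
  (forall t, R t t) -> (forall r s t, R r s -> R s t -> R r t) ->
  (forall A : T -> Prop, (forall s t, A s -> A t -> R s t \/ R t s) ->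
      exists t, forall s, A s -> R s t) ->
  exists t, forall s, R t s -> R s t.
Proof.
  intros Hr Ht Hc.
  assert (E : forall a b, R a b <-> boolp.asbool (R a b) = true).
  { intros a b. apply reflect_iff. apply boolp.asboolP. }
  destruct (@classical_sets.ZL_preorder T t0 (fun a b => boolp.asbool (R a b))) as [t Ht'].
  - intro t. apply E. apply Hr.
  - intros r s u H1 H2. apply E. apply E in H1. apply E in H2. eauto.
  - intros A HA. destruct (Hc A) as [t Hta].
    + intros s u Hs Hu. destruct (HA s u Hs Hu) as [H|H]; [left|right]; apply E; exact H.
    + exists t. intros s Hs. apply E. auto.
  - exists t. intros s Hs. assert (H := Ht' s). 
    apply E. apply H. apply E. exact Hs.
Qed.

Section HBsec.
Variable Z : Type.
Definition vadd (x y : Z -> R) : Z -> R := fun z => x z + y z.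
Definition vscal (c : R) (x : Z -> R) : Z -> R := fun z => c * x z.
Definition vzero : Z -> R := fun _ => 0.
Definition subspace (E : (Z -> R) -> Prop) :=
  E vzero /\ (forall x y, E x -> E y -> E (vadd x y)) /\ (forall c x, E x -> E (vscal c x)).
Definition linear_on (E : (Z -> R) -> Prop) (g : (Z -> R) -> R) :=
  (forall x y, E x -> E y -> g (vadd x y) = g x + g y) /\
  (forall c x, E x -> g (vscal c x) = c * g x).

Variables (W : (Z -> R) -> Prop) (s : (Z -> R) -> R).
Hypothesis W_sub : subspace W.
Hypothesis s_add : forall x y, W x -> W y -> s (vadd x y) <= s x + s y.
Hypothesis s_hom : forall c x, 0 < c -> W x -> s (vscal c x) = c * s x.
Variables (D : (Z -> R) -> Prop) (f : (Z -> R) -> R).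
Hypothesis D_sub : subspace D.
Hypothesis D_W : forall x, D x -> W x.
Hypothesis f_lin : linear_on D f.
Hypothesis f_dom : forall x, D x -> f x <= s x.

Ltac fe := apply functional_extensionality; intro; unfold vadd, vscal, vzero; ring.

Record pext := mkpext { pE : (Z -> R) -> Prop; pg : (Z -> R) -> R }.
Definition valid (e : pext) :=
  subspace (pE e) /\ (forall x, D x -> pE e x) /\ (forall x, pE e x -> W x) /\
  linear_on (pE e) (pg e) /\ (forall x, D x -> pg e x = f x) /\
  (forall x, pE e x -> pg e x <= s x).
Definition VT := { e : pext | valid e }.
Definition ple (a b : VT) :=
  (forall x, pE (proj1_sig a) x -> pE (proj1_sig b) x) /\
  (forall x, pE (proj1_sig a) x -> pg (proj1_sig b) x = pg (proj1_sig a) x).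

Lemma lin_zero E g : subspace E -> linear_on E g -> g vzero = 0.
Proof.
  intros [H0 _] [_ Hs].
  assert (vzero = vscal 0 vzero) as ->.
  { apply functional_extensionality; intro; unfold vscal, vzero; ring. }
  rewrite Hs by exact H0. ring.
Qed.

Lemma valid0 : valid (mkpext D f).
Proof.
  unfold valid; simpl. repeat split; auto; try apply D_sub; try apply f_lin.
Qed.

Lemma chain_ub : forall A : VT -> Prop, (forall a b, A a -> A b -> ple a b \/ ple b a) ->
  exists t, forall u, A u -> ple u t.
Proof.
  intros A HA.
  destruct (classic (exists t, A t)) as [[t0 Ht0]|Hne].
  2:{ exists (exist _ _ valid0). intros u Hu. exfalso; eauto. }
  set (E := fun x => exists t, A t /\ pE (proj1_sig t) x).
  set (g := fun x => epsilon (inhabits 0)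
         (fun v => exists t, A t /\ pE (proj1_sig t) x /\ pg (proj1_sig t) x = v)).
  assert (Hg : forall t x, A t -> pE (proj1_sig t) x -> g x = pg (proj1_sig t) x).
  { intros t x Ht Hx. unfold g.
    destruct (epsilon_spec (inhabits 0)
         (fun v => exists t, A t /\ pE (proj1_sig t) x /\ pg (proj1_sig t) x = v))
      as [t' [Ht' [Hx' Hv]]].
    { exists (pg (proj1_sig t) x), t; auto. }
    rewrite <- Hv.
    destruct (HA t t' Ht Ht') as [[H1 H2]|[H1 H2]]; auto. symmetry; auto. }
  assert (Hcom : forall x y, E x -> E y -> exists t, A t /\ pE (proj1_sig t) x /\ pE (proj1_sig t) y).
  { intros x y [t1 [Ht1 Hx]] [t2 [Ht2 Hy]].
    destruct (HA t1 t2 Ht1 Ht2) as [[H1 _]|[H1 _]].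
    - exists t2; auto.
    - exists t1; auto. }
  assert (Hv : valid (mkpext E g)).
  { destruct (proj2_sig t0) as [[Hz _] [HD _]].
    unfold valid; simpl. split; [|split; [|split; [|split; [|split]]]].
    - split; [|split].
      + exists t0; auto.
      + intros x y Hx Hy. destruct (Hcom x y Hx Hy) as [t [Ht [H1 H2]]].
        exists t. split; auto. destruct (proj2_sig t) as [[_ [Ha _]] _]. auto.
      + intros c x [t [Ht Hx]]. exists t. split; auto.
        destruct (proj2_sig t) as [[_ [_ Ha]] _]. auto.
    - intros x Hx. exists t0; auto.
    - intros x [t [Ht Hx]]. destruct (proj2_sig t) as [_ [_ [HW _]]]. auto.
    - split.
      + intros x y Hx Hy. destruct (Hcom x y Hx Hy) as [t [Ht [H1 H2]]].
        destruct (proj2_sig t) as [[_ [Ha Hs]] [_ [_ [[Hl _] _]]]].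
        rewrite (Hg t) by auto. rewrite (Hg t x) by auto. rewrite (Hg t y) by auto. auto.
      + intros c x [t [Ht Hx]].
        destruct (proj2_sig t) as [[_ [Ha Hs]] [_ [_ [[_ Hl] _]]]].
        rewrite (Hg t) by auto. rewrite (Hg t x) by auto. auto.
    - intros x Hx. rewrite (Hg t0) by auto. destruct (proj2_sig t0) as [_ [_ [_ [_ [Hf _]]]]]. auto.
    - intros x [t [Ht Hx]]. rewrite (Hg t) by auto.
      destruct (proj2_sig t) as [_ [_ [_ [_ [_ Hs]]]]]. auto. }
  exists (exist _ _ Hv). intros u Hu. split; simpl.
  - intros x Hx. exists u; auto.
  - intros x Hx. apply (Hg u); auto.
Qed.

Lemma extend_step (e : VT) x0 : W x0 -> ~ pE (proj1_sig e) x0 ->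
  exists e' : VT, ple e e' /\ pE (proj1_sig e') x0.
Proof.
  intros HW0 Hn.
  destruct e as [[E g] He]; simpl in *.
  destruct He as [HE [HDE [HEW [[gadd gscal] [gf gs]]]]].
  cbn [pE pg] in *.
  destruct HE as [E0 [Eadd Escal]].
  destruct W_sub as [W0 [Wadd Wscal]].
  assert (g0 : g vzero = 0) by (apply (lin_zero E); [split; auto|split; auto]).
  set (mx := vscal (-1) x0).
  assert (Wmx : W mx) by (apply Wscal; auto).
  set (Aset := fun r => exists y, E y /\ r = g y - s (vadd y mx)).
  assert (key : forall y1 y2, E y1 -> E y2 -> g y1 - s (vadd y1 mx) <= s (vadd y2 x0) - g y2).
  { intros y1 y2 H1 H2.
    assert (Hsum : vadd y1 y2 = vadd (vadd y1 mx) (vadd y2 x0)).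
    { apply functional_extensionality; intro z; unfold vadd, mx, vscal; ring. }
    assert (Ha : g (vadd y1 y2) <= s (vadd y1 y2)) by auto.
    rewrite gadd in Ha by auto. rewrite Hsum in Ha.
    assert (Hb : s (vadd (vadd y1 mx) (vadd y2 x0)) <= s (vadd y1 mx) + s (vadd y2 x0)).
    { apply s_add; apply Wadd; auto. }
    lra. }
  destruct (completeness Aset) as [c [Hcub Hcl]].
  { exists (s (vadd vzero x0) - g vzero). intros r [y [Hy ->]]. apply key; auto. }
  { exists (g vzero - s (vadd vzero mx)). exists vzero; auto. }
  assert (c_le : forall y, E y -> c <= s (vadd y x0) - g y).
  { intros y Hy. apply Hcl. intros r [y1 [Hy1 ->]]. apply key; auto. }
  assert (c_ge : forall y, E y -> g y - s (vadd y mx) <= c).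
  { intros y Hy. apply Hcub. exists y; auto. }
  set (E' := fun z => exists y t, E y /\ z = vadd y (vscal t x0)).
  assert (uniq : forall y1 t1 y2 t2, E y1 -> E y2 -> vadd y1 (vscal t1 x0) = vadd y2 (vscal t2 x0) ->
                   t1 = t2 /\ y1 = y2).
  { intros y1 t1 y2 t2 H1 H2 Heq.
    assert (Hp : forall z, y1 z + t1 * x0 z = y2 z + t2 * x0 z).
    { intro z. exact (f_equal (fun h => h z) Heq). }
    destruct (Req_dec t1 t2) as [Ht|Ht].
    - split; auto. subst. apply functional_extensionality; intro z. specialize (Hp z). lra.
    - exfalso. apply Hn.
      assert (x0 = vscal (/ (t1 - t2)) (vadd y2 (vscal (-1) y1))) as ->.
      { apply functional_extensionality; intro z. unfold vscal, vadd. specialize (Hp z).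
        apply Rmult_eq_reg_l with (t1 - t2). 2: lra.
        field_simplify; [|lra]. lra. }
      apply Escal. apply Eadd; auto. }
  set (g' := fun z => epsilon (inhabits 0) (fun v => exists y t, E y /\ z = vadd y (vscal t x0) /\ v = g y + t * c)).
  assert (Hg' : forall y t, E y -> g' (vadd y (vscal t x0)) = g y + t * c).
  { intros y t Hy. unfold g'.
    destruct (epsilon_spec (inhabits 0) (fun v => exists y0 t0, E y0 /\ vadd y (vscal t x0) = vadd y0 (vscal t0 x0) /\ v = g y0 + t0 * c)) as [y1 [t1 [H1 [H2 H3]]]].
    { exists (g y + t * c), y, t. auto. }
    rewrite H3. destruct (uniq y t y1 t1 Hy H1 H2) as [-> ->]. reflexivity. }
  assert (Hv : valid (mkpext E' g')).
  { unfold valid; cbn [pE pg].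
    split; [|split; [|split; [|split; [|split]]]].
    - split; [|split].
      + exists vzero, 0. split; auto. fe.
      + intros z1 z2 [y1 [t1 [H1 ->]]] [y2 [t2 [H2 ->]]].
        exists (vadd y1 y2), (t1 + t2). split; auto. fe.
      + intros a z [y [t [H ->]]]. exists (vscal a y), (a * t). split; auto. fe.
    - intros x Hx. exists x, 0. split; auto. fe.
    - intros z [y [t [H ->]]]. apply Wadd; auto.
    - split.
      + intros z1 z2 [y1 [t1 [H1 ->]]] [y2 [t2 [H2 ->]]].
        replace (vadd (vadd y1 (vscal t1 x0)) (vadd y2 (vscal t2 x0)))
          with (vadd (vadd y1 y2) (vscal (t1 + t2) x0)) by fe.
        rewrite !Hg' by auto. rewrite gadd by auto. ring.
      + intros a z [y [t [H ->]]].
        replace (vscal a (vadd y (vscal t x0))) with (vadd (vscal a y) (vscal (a * t) x0)) by fe.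
        rewrite !Hg' by auto. rewrite gscal by auto. ring.
    - intros x Hx. replace x with (vadd x (vscal 0 x0)) by fe.
      rewrite Hg' by auto. rewrite gf by auto.
      replace (vadd x (vscal 0 x0)) with x by fe. ring.
    - intros z [y [t [H ->]]]. rewrite Hg' by auto.
      destruct (Rtotal_order t 0) as [Hlt|[Heq|Hgt]].
      + set (u := - t). set (y' := vscal (/ u) y).
        assert (Hy' : E y') by (apply Escal; auto).
        assert (Hc := c_ge y' Hy').
        assert (Hu : 0 < u) by (unfold u; lra).
        assert (e1 : g y = u * g y').
        { unfold y'. rewrite gscal by auto. field. lra. }
        assert (e2 : vadd y (vscal t x0) = vscal u (vadd y' mx)).
        { unfold y', mx, u. apply functional_extensionality; intro; unfold vadd, vscal. field. lra. }
        rewrite e2, s_hom by (auto; apply Wadd; auto). rewrite e1.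
        replace t with (- u) by (unfold u; ring).
        assert (u * (g y' - s (vadd y' mx)) <= u * c) by (apply Rmult_le_compat_l; lra).
        lra.
      + subst t. replace (vadd y (vscal 0 x0)) with y by fe. rewrite Rmult_0_l, Rplus_0_r. auto.
      + set (y' := vscal (/ t) y).
        assert (Hy' : E y') by (apply Escal; auto).
        assert (Hc := c_le y' Hy').
        assert (e1 : g y = t * g y').
        { unfold y'. rewrite gscal by auto. field. lra. }
        assert (e2 : vadd y (vscal t x0) = vscal t (vadd y' x0)).
        { unfold y'. apply functional_extensionality; intro; unfold vadd, vscal. field. lra. }
        rewrite e2, s_hom by (auto; apply Wadd; auto). rewrite e1.
        assert (t * c <= t * (s (vadd y' x0) - g y')) by (apply Rmult_le_compat_l; lra).
        lra. }
  exists (exist _ _ Hv). cbn [proj1_sig pE pg]. split; [split|].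
  - intros x Hx. exists x, 0. split; auto. fe.
  - intros x Hx. cbn [pg]. assert (Ex : x = vadd x (vscal 0 x0)) by fe.
    rewrite Ex at 1. rewrite Hg' by auto. simpl. ring.
  - exists vzero, 1. split; auto. fe.
Qed.

Theorem hahn_banach : exists F, linear_on W F /\ (forall x, D x -> F x = f x) /\
  (forall x, W x -> F x <= s x).
Proof.
  destruct (@zorn_pre VT (exist _ _ valid0) ple) as [[[E g] He] Hmax].
  - intro t. split; auto.
  - intros a b c [H1 H2] [H3 H4]. split; auto. intros x Hx. rewrite H4 by auto. auto.
  - exact chain_ub.
  - exists g. destruct He as [HE [HDE [HEW [Hl [Hf Hs]]]]]. cbn [pE pg] in *.
    assert (HEq : forall x, W x -> E x).
    { intros x Hx. apply NNPP. intro Hn.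
      destruct (extend_step (exist valid (mkpext E g) (conj HE (conj HDE (conj HEW (conj Hl (conj Hf Hs)))))) x Hx Hn)
        as [e' [Hle Hx']].
      destruct (Hmax e' Hle) as [H1 _]. apply Hn. apply H1. auto. }
    split; [|split]; auto.
    destruct Hl as [Ha Hsc]. split; auto.
Qed.
End HBsec.

Lemma Rabs_le_between x B : Rabs x <= B <-> - B <= x <= B.
Proof. unfold Rabs; destruct (Rcase_abs x); split; intros; lra. Qed.

Lemma Rabs_triang_inv' x y : Rabs x - Rabs y <= Rabs (x - y).
Proof. unfold Rabs; destruct (Rcase_abs x), (Rcase_abs y), (Rcase_abs (x - y)); lra. Qed.

Lemma supR_spec {X : Type} (f : X -> R) (x0 : X) B : (forall x, f x <= B) ->
  (forall x, f x <= supR f) /\ (forall c, (forall x, f x <= c) -> supR f <= c).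
Proof.
  intros HB. unfold supR.
  destruct (Lub_Rbar_correct (fun r => exists x, r = f x)) as [Hub Hl].
  assert (Hup : Rbar_le (Lub_Rbar (fun r => exists x, r = f x)) (Finite B)).
  { apply Hl. intros r [x ->]. simpl. apply HB. }
  assert (Hlo : Rbar_le (Finite (f x0)) (Lub_Rbar (fun r => exists x, r = f x))).
  { apply Hub. exists x0; auto. }
  destruct (Lub_Rbar (fun r => exists x, r = f x)) as [l| |] eqn:El; simpl in *; try contradiction.
  split.
  - intros x. assert (H := Hub (f x) (ex_intro _ x eq_refl)). exact H.
  - intros c Hc. assert (H : Rbar_le (Finite l) (Finite c)).
    { apply (Hl (Finite c)). intros r [x ->]. simpl. apply Hc. }
    exact H.
Qed.

Lemma supR_abs {X : Type} (f : X -> R) (x0 : X) B : (forall x, Rabs (f x) <= B) ->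
  Rabs (supR f) <= B.
Proof.
  intros HB. destruct (supR_spec f x0 B) as [H1 H2].
  { intro x. specialize (HB x). apply Rabs_le_between in HB. lra. }
  assert (H3 := H1 x0). assert (H4 := H2 B (fun x => proj2 (proj1 (Rabs_le_between _ _) (HB x)))).
  assert (H5 := HB x0). apply Rabs_le_between in H5. apply Rabs_le_between. lra.
Qed.

Lemma supR_diff {X : Type} (f g : X -> R) (x0 : X) B e :
  (forall x, Rabs (f x) <= B) -> (forall x, Rabs (g x) <= B) ->
  (forall x, Rabs (f x - g x) <= e) -> Rabs (supR f - supR g) <= e.
Proof.
  intros Hf Hg Hd.
  destruct (supR_spec f x0 B) as [F1 F2].
  { intro x. specialize (Hf x). apply Rabs_le_between in Hf. lra. }
  destruct (supR_spec g x0 B) as [G1 G2].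
  { intro x. specialize (Hg x). apply Rabs_le_between in Hg. lra. }
  assert (supR f <= supR g + e).
  { apply F2. intro x. specialize (Hd x). apply Rabs_le_between in Hd. specialize (G1 x). lra. }
  assert (supR g <= supR f + e).
  { apply G2. intro x. specialize (Hd x). apply Rabs_le_between in Hd. specialize (F1 x). lra. }
  apply Rabs_le_between. lra.
Qed.

Lemma infR_nonneg {X : Type} (f : X -> R) (x0 : X) B : (forall x, Rabs (f x) <= B) ->
  (0 <= infR f <-> forall x, 0 <= f x).
Proof.
  intros HB. unfold infR.
  destruct (supR_spec (fun x => - f x) x0 B) as [H1 H2].
  { intro x. specialize (HB x). apply Rabs_le_between in HB. lra. }
  split.
  - intros H x. specialize (H1 x). simpl in H1. lra.
  - intros H. assert (supR (fun x => - f x) <= 0).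
    { apply H2. intro x. specialize (H x). lra. }
    lra.
Qed.

Section Sem.
Variable L : language.

Lemma scons_F1 {X : Type} {n} (x : X) (a : Fin.t n -> X) : scons x a Fin.F1 = x.
Proof. reflexivity. Qed.
Lemma scons_FS {X : Type} {n} (x : X) (a : Fin.t n -> X) i : scons x a (Fin.FS i) = a i.
Proof. reflexivity. Qed.
Lemma scons_eta {X : Type} {n} (c : Fin.t (S n) -> X) :
  c = scons (c Fin.F1) (fun i => c (Fin.FS i)).
Proof.
  apply functional_extensionality. intro i. pattern i. apply Fin.caseS'; reflexivity.
Qed.
Lemma fin0_eq {X : Type} (a : Fin.t 0 -> X) : a = empty_assignment.
Proof. apply functional_extensionality. intro i. apply (Fin.case0 (fun i => a i = _) i). Qed.

Lemma eval_bounded (N : structure L) n (phi : formula L n) :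
  exists B, forall a, Rabs (eval N phi a) <= B.
Proof.
  induction phi; simpl.
  - exists 1. intros. rewrite Rabs_R1. lra.
  - exists 1. intros. rewrite Rabs_pos_eq by apply Defs.dist_nonneg. apply Defs.dist_diam.
  - set (y0 := fun _ : Fin.t (rarity L P) => point N).
    exists (Rabs (rinterp N P y0) + Rabs (rlip L P)). intro a.
    assert (H := rinterp_lip L N P (fun i => teval N a (t i)) y0 1 (fun i => Defs.dist_diam L N _ _)).
    assert (H2 : Rabs (rlip L P * 1) <= Rabs (rlip L P)) by (rewrite Rmult_1_r; lra).
    assert (H3 := Rle_abs (rlip L P * 1)).
    pose proof (Rabs_triang_inv' (rinterp N P (fun i => teval N a (t i))) (rinterp N P y0)).
    lra.
  - destruct IHphi1 as [B1 H1], IHphi2 as [B2 H2]. exists (B1 + B2). intro a.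
    eapply Rle_trans; [apply Rabs_triang|]. specialize (H1 a); specialize (H2 a); lra.
  - destruct IHphi as [B H]. exists (Rabs r * B). intro a. rewrite Rabs_mult.
    apply Rmult_le_compat_l; [apply Rabs_pos|auto].
  - destruct IHphi as [B H]. exists B. intro a.
    apply (supR_abs _ (point N)). intro x. apply H.
  - destruct IHphi as [B H]. exists B. intro a. unfold infR. rewrite Rabs_Ropp.
    apply (supR_abs _ (point N)). intro x. rewrite Rabs_Ropp. apply H.
Qed.

Lemma fin_bound m (P : Fin.t m -> R -> Prop) :
  (forall i C C', C <= C' -> P i C -> P i C') -> (forall i, exists C, 0 <= C /\ P i C) ->
  exists C, 0 <= C /\ forall i, P i C.
Proof.
  induction m; intros Hmono Hex.
  - exists 0. split; [lra|]. intro i. apply (Fin.case0 (fun i => P i 0) i).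
  - destruct (IHm (fun i => P (Fin.FS i))) as [C [HC HP]].
    { intros i C C' H1 H2. eapply Hmono; eauto. }
    { intro i. apply Hex. }
    destruct (Hex Fin.F1) as [C1 [HC1 HP1]].
    exists (Rmax C C1). split. { eapply Rle_trans; [apply HC|apply Rmax_l]. }
    intro i. pattern i. apply Fin.caseS'.
    + eapply Hmono; [apply Rmax_r|auto].
    + intro j. eapply Hmono; [apply Rmax_l|auto].
Qed.

Lemma teval_lip (N : structure L) n (t : term L n) : exists C, 0 <= C /\
  forall a b d, 0 <= d -> (forall i, Defs.dist N (a i) (b i) <= d) ->
    Defs.dist N (teval N a t) (teval N b t) <= C * d.
Proof.
  induction t as [i|f args IH].
  - exists 1. split; [lra|]. intros a b d Hd H. simpl. rewrite Rmult_1_l. auto.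
  - destruct (fin_bound _ (fun i C => forall a b d, 0 <= d -> (forall i, Defs.dist N (a i) (b i) <= d) ->
       Defs.dist N (teval N a (args i)) (teval N b (args i)) <= C * d)) as [C [HC HP]].
    { intros i C C' HCC' H a b d Hd Hab. eapply Rle_trans; [apply (H a b d Hd Hab)| nra]. }
    { intro i. destruct (IH i) as [C [HC HP]]. exists C; auto. }
    exists (Rabs (flip L f) * C). split. { apply Rmult_le_pos; auto. apply Rabs_pos. }
    intros a b d Hd Hab. simpl.
    eapply Rle_trans. { apply finterp_lip. intro i. apply (HP i a b d Hd Hab). }
    rewrite Rmult_assoc. apply Rmult_le_compat_r. { apply Rmult_le_pos; auto. }
    apply Rle_abs.
Qed.

Lemma dist_diff (N : structure L) x y x' y' :
  Rabs (Defs.dist N x y - Defs.dist N x' y') <= Defs.dist N x x' + Defs.dist N y y'.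
Proof.
  apply Rabs_le_between.
  pose proof (Defs.dist_tri L N x x' y). pose proof (Defs.dist_tri L N x' y' y).
  pose proof (Defs.dist_tri L N x' x y'). pose proof (Defs.dist_tri L N x y y').
  pose proof (Defs.dist_sym L N x x'). pose proof (Defs.dist_sym L N y y').
  lra.
Qed.

Lemma eval_lip (N : structure L) n (phi : formula L n) : exists C, 0 <= C /\
  forall a b d, 0 <= d -> (forall i, Defs.dist N (a i) (b i) <= d) ->
    Rabs (eval N phi a - eval N phi b) <= C * d.
Proof.
  induction phi; simpl.
  - exists 0. split; [lra|]. intros. replace (1 - 1) with 0 by ring. rewrite Rabs_R0. lra.
  - destruct (teval_lip N n t) as [C1 [HC1 H1]]. destruct (teval_lip N n t0) as [C2 [HC2 H2]].
    exists (C1 + C2). split; [lra|]. intros a b d Hd Hab.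
    eapply Rle_trans; [apply dist_diff|]. specialize (H1 a b d Hd Hab). specialize (H2 a b d Hd Hab).
    lra.
  - destruct (fin_bound _ (fun i C => forall a b d, 0 <= d -> (forall i, Defs.dist N (a i) (b i) <= d) ->
       Defs.dist N (teval N a (t i)) (teval N b (t i)) <= C * d)) as [C [HC HP]].
    { intros i C C' HCC' H a b d Hd Hab. eapply Rle_trans; [apply (H a b d Hd Hab)|]. nra. }
    { intro i. destruct (teval_lip N n (t i)) as [C [HC HP]]. exists C; auto. }
    exists (Rabs (rlip L P) * C). split. { apply Rmult_le_pos; auto. apply Rabs_pos. }
    intros a b d Hd Hab.
    eapply Rle_trans. { apply rinterp_lip. intro i. apply (HP i a b d Hd Hab). }
    rewrite Rmult_assoc. apply Rmult_le_compat_r. { apply Rmult_le_pos; auto. }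
    apply Rle_abs.
  - destruct IHphi1 as [C1 [HC1 H1]], IHphi2 as [C2 [HC2 H2]].
    exists (C1 + C2). split; [lra|]. intros a b d Hd Hab.
    specialize (H1 a b d Hd Hab). specialize (H2 a b d Hd Hab).
    replace (eval N phi1 a + eval N phi2 a - (eval N phi1 b + eval N phi2 b))
      with ((eval N phi1 a - eval N phi1 b) + (eval N phi2 a - eval N phi2 b)) by ring.
    eapply Rle_trans; [apply Rabs_triang|]. lra.
  - destruct IHphi as [C [HC H]]. exists (Rabs r * C). split. { apply Rmult_le_pos; auto. apply Rabs_pos. }
    intros a b d Hd Hab. rewrite <- Rmult_minus_distr_l, Rabs_mult, Rmult_assoc.
    apply Rmult_le_compat_l; [apply Rabs_pos|auto].
  - destruct IHphi as [C [HC H]]. exists C. split; auto. intros a b d Hd Hab.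
    destruct (eval_bounded N _ phi) as [B HB].
    apply (supR_diff _ _ (point N) B); try (intro; apply HB).
    intro x. apply H; auto. intro i. pattern i. apply Fin.caseS'.
    + simpl. rewrite (proj2 (Defs.dist_eq0 L N x x) eq_refl). auto.
    + intro j. apply Hab.
  - destruct IHphi as [C [HC H]]. exists C. split; auto. intros a b d Hd Hab.
    destruct (eval_bounded N _ phi) as [B HB]. unfold infR.
    replace (- supR (fun x : N => - eval N phi (scons x a)) - - supR (fun x : N => - eval N phi (scons x b)))
      with (- (supR (fun x : N => - eval N phi (scons x a)) - supR (fun x : N => - eval N phi (scons x b)))) by ring.
    rewrite Rabs_Ropp.
    apply (supR_diff _ _ (point N) B); try (intro; rewrite Rabs_Ropp; apply HB).
    intro x. replace (- eval N phi (scons x a) - - eval N phi (scons x b))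
      with (- (eval N phi (scons x a) - eval N phi (scons x b))) by ring. rewrite Rabs_Ropp.
    apply H; auto. intro i. pattern i. apply Fin.caseS'.
    + simpl. rewrite (proj2 (Defs.dist_eq0 L N x x) eq_refl). auto.
    + intro j. apply Hab.
Qed.

Fixpoint closeinf (n : nat) : formula L n -> sentence L :=
  match n return formula L n -> sentence L with
  | 0 => fun phi => phi
  | S n' => fun phi => closeinf n' (finf phi)
  end.

Lemma closeinf_nonneg (N : structure L) n (phi : formula L n) :
  0 <= sent_value N (closeinf n phi) <-> forall a, 0 <= eval N phi a.
Proof.
  revert phi. induction n; intro phi; simpl.
  - unfold sent_value. split.
    + intros H a. rewrite (fin0_eq a). auto.
    + intros H. apply H.
  - rewrite IHn. simpl. destruct (eval_bounded N _ phi) as [B HB].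
    split.
    + intros H c. rewrite (scons_eta c).
      specialize (H (fun i => c (Fin.FS i))).
      rewrite (infR_nonneg _ (point N) B) in H by (intro; apply HB). apply H.
    + intros H a. rewrite (infR_nonneg _ (point N) B) by (intro; apply HB). intro x. apply H.
Qed.

Lemma transfer (T : theory L) (M : structure L) : complete_theory T -> models M T ->
  forall n (phi : formula L n), (forall a, 0 <= eval M phi a) -> T_nonneg T phi.
Proof.
  intros [_ HT] HM n phi H N HN a.
  destruct (HT (closeinf n phi)) as [r Hr].
  assert (H1 : 0 <= sent_value M (closeinf n phi)) by (apply closeinf_nonneg; auto).
  rewrite (Hr M HM) in H1. rewrite <- (Hr N HN) in H1.
  rewrite closeinf_nonneg in H1. apply H1.
Qed.
End Sem.

Lemma scons_eta' {X : Type} {n} (c : Fin.t (S n) -> X) :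
  c = scons (c Fin.F1) (fun i => c (Fin.FS i)).
Proof.
  apply functional_extensionality. intro i. pattern i. apply Fin.caseS'; reflexivity.
Qed.

Definition Kopen {L} (M : structure L) n (U : (Fin.t n -> M) -> Prop) :=
  forall a, U a -> exists e, 0 < e /\
    forall b, (forall i, Defs.dist M (a i) (b i) < e) -> U b.

Fixpoint epsmin {I : Type} (l : list {p : I * R | 0 < snd p}) : R :=
  match l with
  | nil => 1
  | p :: l' => Rmin (snd (proj1_sig p)) (epsmin l')
  end.

Lemma epsmin_pos {I : Type} (l : list {p : I * R | 0 < snd p}) : 0 < epsmin l.
Proof.
  induction l as [|[p Hp] l IH]; simpl; [lra|]. apply Rmin_pos; auto.
Qed.

Lemma epsmin_le {I : Type} (l : list {p : I * R | 0 < snd p}) p : In p l ->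
  epsmin l <= snd (proj1_sig p).
Proof.
  induction l as [|q l IH]; simpl; [tauto|]. intros [->|H].
  - apply Rmin_l.
  - eapply Rle_trans; [apply Rmin_r|auto].
Qed.

Lemma Kcompact {L} (M : structure L) : compact_structure M ->
  forall n I (U : I -> (Fin.t n -> M) -> Prop), (forall i, Kopen M n (U i)) ->
    (forall a, exists i, U i a) -> exists l : list I, forall a, exists i, In i l /\ U i a.
Proof.
  intros HM n. induction n as [|n IHn]; intros I U HU Hcov.
  - destruct (Hcov (fun i => Fin.case0 (fun _ => M) i)) as [i Hi].
    exists (i :: nil). intro a. exists i. split; [left; auto|].
    destruct (HU i _ Hi) as [e [He Hb]]. apply Hb. intro j. apply (Fin.case0 (fun _ => _) j).
  - set (good := fun (x : M) (r : R) (l : list I) => 0 < r /\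
          forall y, Defs.dist M x y < r -> forall b, exists i, In i l /\ U i (scons y b)).
    assert (Hx : forall x, exists r l, good x r l).
    { intro x.
      set (I' := {p : I * R | 0 < snd p}).
      set (Wx := fun (p : I') (a : Fin.t n -> M) => exists eta, 0 < eta /\
              forall y b, Defs.dist M x y < snd (proj1_sig p) ->
                (forall j, Defs.dist M (a j) (b j) < eta) -> U (fst (proj1_sig p)) (scons y b)).
      destruct (IHn I' Wx) as [l Hl].
      - intros p a [eta [Heta H]]. exists (eta / 2). split; [lra|].
        intros a' Ha'. exists (eta / 2). split; [lra|].
        intros y b Hy Hb. apply H; auto. intro j.
        pose proof (Defs.dist_tri L M (a j) (a' j) (b j)). specialize (Ha' j). specialize (Hb j). lra.
      - intro a. destruct (Hcov (scons x a)) as [i Hi].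
        destruct (HU i _ Hi) as [e [He Hb]].
        exists (exist _ (i, e) He). exists e. split; auto. simpl.
        intros y b Hy Hab. apply Hb. intro j. pattern j. apply Fin.caseS'; simpl; auto.
      - exists (epsmin l), (map (fun p : I' => fst (proj1_sig p)) l).
        split; [apply epsmin_pos|]. intros y Hy b.
        destruct (Hl b) as [p [Hp [eta [Heta H]]]].
        exists (fst (proj1_sig p)). split. { apply (in_map (fun p : I' => fst (proj1_sig p))); auto. }
        apply H.
        + eapply Rlt_le_trans; [apply Hy|]. apply epsmin_le; auto.
        + intro j. rewrite (proj2 (Defs.dist_eq0 L M _ _) eq_refl). auto. }
    set (V := fun (q : M * R * list I) (y : M) =>
          Defs.dist M (fst (fst q)) y < snd (fst q) /\ good (fst (fst q)) (snd (fst q)) (snd q)).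
    destruct (HM _ V) as [qs Hqs].
    + intros [[x r] l] y [Hy Hg]. simpl in *. exists (r - Defs.dist M x y). split; [lra|].
      intros z Hz. split; auto. simpl.
      pose proof (Defs.dist_tri L M x y z). lra.
    + intro y. destruct (Hx y) as [r [l Hg]]. exists (y, r, l). split; auto. simpl.
      rewrite (proj2 (Defs.dist_eq0 L M _ _) eq_refl). apply Hg.
    + exists (flat_map (fun q : M * R * list I => snd q) qs). intro c.
      rewrite (scons_eta' c).
      destruct (Hqs (c Fin.F1)) as [[[x r] l] [Hin [Hd [Hr Hg]]]]. simpl in *.
      destruct (Hg _ Hd (fun i => c (Fin.FS i))) as [i [Hi HUi]].
      exists i. split; auto. apply in_flat_map. exists (x, r, l). auto.
Qed.

Arguments vadd {Z}. Arguments vscal {Z}. Arguments vzero {Z}.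
Arguments subspace {Z}. Arguments linear_on {Z}.

Section MainSec.
Variables (L : language) (T : theory L) (M : structure L).
Hypothesis HT : complete_theory T.
Hypothesis HM : models M T.
Variables (n : nat) (p : formula L n -> R).
Hypothesis Hp : extreme_type T n p.

Definition ev (phi : formula L n) (b : Fin.t n -> M) := eval M phi b.
Definition fz : formula L n := fscale 0 fone.

Lemma p_type : is_type T n p.
Proof. apply Hp. Qed.

Lemma p_equiv phi psi : (forall b, ev phi b = ev psi b) -> p phi = p psi.
Proof.
  intros H. apply (type_equiv _ _ _ p_type). intros N HN a.
  assert (H1 := transfer L T M HT HM n (fadd phi (fscale (-1) psi))).
  assert (H2 := transfer L T M HT HM n (fadd psi (fscale (-1) phi))).
  simpl in H1, H2.
  assert (A1 : 0 <= eval N phi a + -1 * eval N psi a).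
  { apply (H1 (fun b => ltac:(unfold ev in H; rewrite H; lra)) N HN a). }
  assert (A2 : 0 <= eval N psi a + -1 * eval N phi a).
  { apply (H2 (fun b => ltac:(unfold ev in H; rewrite H; lra)) N HN a). }
  lra.
Qed.

Lemma p_le phi c : (forall b, ev phi b <= c) -> p phi <= c.
Proof.
  intros H.
  assert (H1 := transfer L T M HT HM n (fadd (fscale c fone) (fscale (-1) phi))).
  simpl in H1.
  assert (A : 0 <= p (fadd (fscale c fone) (fscale (-1) phi))).
  { apply (type_pos _ _ _ p_type). apply H1. intro a. specialize (H a). unfold ev in H. lra. }
  rewrite (type_add _ _ _ p_type), !(type_scale _ _ _ p_type), (type_one _ _ _ p_type) in A.
  lra.
Qed.

Definition supp (S : (Fin.t n -> M) -> Prop) (q : formula L n -> R) :=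
  forall phi c, (forall b, S b -> ev phi b <= c) -> q phi <= c.

Lemma supp_mono S S' q : supp S q -> (forall b, S b -> S' b) -> supp S' q.
Proof. intros H HS phi c Hc. apply H. auto. Qed.

Lemma supp_nonempty S : supp S p -> exists b, S b.
Proof.
  intros H. apply NNPP. intro Hn.
  assert (p fone <= 0). { apply H. intros b Hb. exfalso. apply Hn. eauto. }
  rewrite (type_one _ _ _ p_type) in H0. lra.
Qed.

Lemma split_supp (S1 S2 : (Fin.t n -> M) -> Prop) :
  supp (fun b => S1 b \/ S2 b) p -> supp S1 p \/ supp S2 p.
Proof.
  intros Hsupp.
  set (Z := ((Fin.t n -> M) + (Fin.t n -> M))%type).
  set (Sz := fun z : Z => match z with inl b => S1 b | inr b => S2 b end).
  set (Wp := fun x : Z -> R => exists phi1 phi2, forall b, x (inl b) = ev phi1 b /\ x (inr b) = ev phi2 b).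
  set (Dp := fun x : Z -> R => exists phi, forall b, x (inl b) = ev phi b /\ x (inr b) = ev phi b).
  destruct (supp_nonempty _ Hsupp) as [b0 Hb0].
  assert (Hz0 : exists z, Sz z).
  { destruct Hb0 as [H|H]; [exists (inl b0)|exists (inr b0)]; exact H. }
  destruct Hz0 as [z0 Hz0].
  set (s := fun x : Z -> R => supR (fun w : {z | Sz z} => x (proj1_sig w))).
  assert (s_spec : forall x, Wp x -> (forall z, Sz z -> x z <= s x) /\
                     (forall c, (forall z, Sz z -> x z <= c) -> s x <= c)).
  { intros x [phi1 [phi2 Hx]].
    destruct (eval_bounded L M n phi1) as [B1 HB1].
    destruct (eval_bounded L M n phi2) as [B2 HB2].
    destruct (supR_spec (fun w : {z | Sz z} => x (proj1_sig w)) (exist _ z0 Hz0) (Rabs B1 + Rabs B2))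
      as [H1 H2].
    { intros [[b|b] Hw]; simpl; destruct (Hx b) as [E1 E2].
      - rewrite E1. specialize (HB1 b). apply Rabs_le_between in HB1. unfold ev.
        pose proof (Rle_abs B1). pose proof (Rabs_pos B2). lra.
      - rewrite E2. specialize (HB2 b). apply Rabs_le_between in HB2. unfold ev.
        pose proof (Rle_abs B2). pose proof (Rabs_pos B1). lra. }
    split.
    - intros z Hz. apply (H1 (exist _ z Hz)).
    - intros c Hc. apply H2. intros [z Hz]. simpl. auto. }
  assert (W_sub : subspace Wp).
  { split; [|split].
    - exists fz, fz. intro b. unfold ev, vzero; simpl. split; ring.
    - intros x y [a1 [a2 Hx]] [c1 [c2 Hy]]. exists (fadd a1 c1), (fadd a2 c2).
      intro b. unfold vadd, ev in *; simpl. destruct (Hx b), (Hy b). split; congruence.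
    - intros c x [a1 [a2 Hx]]. exists (fscale c a1), (fscale c a2).
      intro b. unfold vscal, ev in *; simpl. destruct (Hx b). split; congruence. }
  assert (s_add : forall x y, Wp x -> Wp y -> s (vadd x y) <= s x + s y).
  { intros x y Hx Hy. destruct (s_spec _ Hx) as [X1 _]. destruct (s_spec _ Hy) as [Y1 _].
    apply (proj2 (s_spec _ (proj1 (proj2 W_sub) _ _ Hx Hy))).
    intros z Hz. unfold vadd. specialize (X1 z Hz). specialize (Y1 z Hz). lra. }
  assert (s_hom : forall c x, 0 < c -> Wp x -> s (vscal c x) = c * s x).
  { intros c x Hc Hx. assert (Hcx : Wp (vscal c x)) by (apply W_sub; auto).
    destruct (s_spec _ Hx) as [X1 X2]. destruct (s_spec _ Hcx) as [C1 C2].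
    apply Rle_antisym.
    - apply C2. intros z Hz. unfold vscal. specialize (X1 z Hz). nra.
    - assert (s x <= s (vscal c x) / c).
      { apply X2. intros z Hz. specialize (C1 z Hz). unfold vscal in C1.
        apply (Rmult_le_reg_l c); auto.
        replace (c * (s (vscal c x) / c)) with (s (vscal c x)) by (field; apply Rgt_not_eq; exact Hc). exact C1. }
      apply (Rmult_le_compat_l c) in H; [|lra].
      replace (c * (s (vscal c x) / c)) with (s (vscal c x)) in H by (field; apply Rgt_not_eq; exact Hc). lra. }
  assert (D_sub : subspace Dp).
  { split; [|split].
    - exists fz. intro b. unfold ev, vzero; simpl. split; ring.
    - intros x y [a1 Hx] [c1 Hy]. exists (fadd a1 c1).
      intro b. unfold vadd, ev in *; simpl. destruct (Hx b), (Hy b). split; congruence.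
    - intros c x [a1 Hx]. exists (fscale c a1).
      intro b. unfold vscal, ev in *; simpl. destruct (Hx b). split; congruence. }
  assert (D_W : forall x, Dp x -> Wp x).
  { intros x [phi H]. exists phi, phi. auto. }
  set (f := fun x : Z -> R => p (epsilon (inhabits fone)
            (fun phi => forall b, x (inl b) = ev phi b /\ x (inr b) = ev phi b))).
  assert (f_rep : forall x phi, (forall b, x (inl b) = ev phi b /\ x (inr b) = ev phi b) -> f x = p phi).
  { intros x phi H. unfold f.
    assert (HE := epsilon_spec (inhabits fone)
            (fun phi => forall b, x (inl b) = ev phi b /\ x (inr b) = ev phi b) (ex_intro _ phi H)).
    apply p_equiv. intro b. destruct (HE b), (H b). congruence. }
  assert (f_lin : linear_on Dp f).
  { split.
    - intros x y [a1 Hx] [c1 Hy]. rewrite (f_rep x a1 Hx), (f_rep y c1 Hy).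
      rewrite (f_rep _ (fadd a1 c1)). { apply (type_add _ _ _ p_type). }
      intro b. unfold vadd, ev in *; simpl. destruct (Hx b), (Hy b). split; congruence.
    - intros c x [a1 Hx]. rewrite (f_rep x a1 Hx).
      rewrite (f_rep _ (fscale c a1)). { apply (type_scale _ _ _ p_type). }
      intro b. unfold vscal, ev in *; simpl. destruct (Hx b). split; congruence. }
  assert (f_dom : forall x, Dp x -> f x <= s x).
  { intros x [phi Hx]. rewrite (f_rep x phi Hx). apply Hsupp.
    destruct (s_spec x (D_W x (ex_intro _ phi Hx))) as [S1' _].
    intros b [Hb|Hb]; destruct (Hx b) as [E1 E2].
    - rewrite <- E1. apply (S1' (inl b)). exact Hb.
    - rewrite <- E2. apply (S1' (inr b)). exact Hb. }
  destruct (hahn_banach Z Wp s W_sub s_add s_hom Dp f D_sub D_W f_lin f_dom)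
    as [F [[Fadd Fscal] [FD Fs]]].
  set (Xj := fun (j : bool) (phi : formula L n) (z : Z) =>
         match z with inl b => if j then ev phi b else 0 | inr b => if j then 0 else ev phi b end).
  set (Sj := fun (j : bool) b => if j then S1 b else S2 b).
  assert (XW : forall j phi, Wp (Xj j phi)).
  { intros [|] phi; [exists phi, fz|exists fz, phi]; intro b; unfold ev; simpl; split; auto; ring. }
  set (r := fun j phi => F (Xj j phi)).
  assert (r_sum : forall phi, r true phi + r false phi = p phi).
  { intro phi. unfold r. rewrite <- Fadd by auto.
    rewrite FD.
    - apply f_rep. intro b. unfold vadd; simpl. split; ring.
    - exists phi. intro b. unfold vadd; simpl. split; ring. }
  assert (r_add : forall j phi psi, r j (fadd phi psi) = r j phi + r j psi).
  { intros j phi psi. unfold r. rewrite <- Fadd by auto. f_equal.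
    apply functional_extensionality. intros [b|b]; destruct j; unfold Xj, vadd, ev; simpl; ring. }
  assert (r_scale : forall j c phi, r j (fscale c phi) = c * r j phi).
  { intros j c phi. unfold r. rewrite <- Fscal by auto. f_equal.
    apply functional_extensionality. intros [b|b]; destruct j; unfold Xj, vscal, ev; simpl; ring. }
  assert (r_ext : forall j phi psi, (forall b, ev phi b = ev psi b) -> r j phi = r j psi).
  { intros j phi psi H. unfold r. f_equal.
    apply functional_extensionality. intros [b|b]; destruct j; unfold Xj; simpl; auto. }
  assert (r_conc : forall j phi c, (forall b, Sj j b -> ev phi b <= c) -> r j phi <= c * r j fone).
  { intros j phi c H.
    assert (A : r j (fadd phi (fscale (-c) fone)) <= 0).
    { unfold r. eapply Rle_trans; [apply Fs; auto|]. apply (s_spec _ (XW _ _)).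
      intros [b|b] Hz; destruct j; unfold Xj, Sz, Sj, ev in *; simpl in *.
      all: try lra.
      all: specialize (H b Hz); lra. }
    rewrite r_add, r_scale in A. lra. }
  assert (r_pos : forall j phi, (forall b, 0 <= ev phi b) -> 0 <= r j phi).
  { intros j phi H. assert (A := r_conc j (fscale (-1) phi) 0).
    rewrite r_scale in A. assert (-1 * r j phi <= 0 * r j fone).
    { apply A. intros b _. unfold ev in *; simpl. specialize (H b). lra. }
    lra. }
  assert (r_le : forall j phi c, (forall b, ev phi b <= c) -> r j phi <= c * r j fone).
  { intros j phi c H. apply r_conc. auto. }
  assert (r_one : r true fone + r false fone = 1).
  { rewrite r_sum. apply (type_one _ _ _ p_type). }
  assert (t_pos : 0 <= r true fone) by (apply r_pos; intro; unfold ev; simpl; lra).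
  assert (t_pos' : 0 <= r false fone) by (apply r_pos; intro; unfold ev; simpl; lra).
  assert (r_zero : forall j, r j fone = 0 -> forall phi, r j phi = 0).
  { intros j Hj phi. destruct (eval_bounded L M n phi) as [B HB].
    assert (A1 : r j phi <= B * r j fone).
    { apply r_le. intro b. specialize (HB b). apply Rabs_le_between in HB. unfold ev. lra. }
    assert (A2 : r j (fscale (-1) phi) <= B * r j fone).
    { apply r_le. intro b. specialize (HB b). apply Rabs_le_between in HB. unfold ev; simpl. lra. }
    rewrite r_scale in A2. rewrite Hj in A1, A2. lra. }
  destruct (Req_dec (r true fone) 0) as [H0|H0].
  { right. intros phi c Hc. rewrite <- r_sum, (r_zero true H0 phi), Rplus_0_l.
    eapply Rle_trans; [apply (r_conc false); exact Hc|]. replace (r false fone) with 1 by lra. lra. }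
  destruct (Req_dec (r false fone) 0) as [H1|H1].
  { left. intros phi c Hc. rewrite <- r_sum, (r_zero false H1 phi), Rplus_0_r.
    eapply Rle_trans; [apply (r_conc true); exact Hc|]. replace (r true fone) with 1 by lra. lra. }
  set (t := r true fone).
  assert (Ht : 0 < t < 1) by (unfold t; lra).
  set (q1 := fun phi => r true phi / t).
  set (q2 := fun phi => r false phi / (1 - t)).
  assert (tyj : forall j (tj : R), tj = r j fone -> 0 < tj -> is_type T n (fun phi => r j phi / tj)).
  { intros j tj Etj Htj. constructor.
    - intros phi psi Heq. f_equal. apply r_ext. intro b. apply Heq; auto.
    - intros phi psi. rewrite r_add. field. lra.
    - intros c phi. rewrite r_scale. field. lra.
    - intros phi Hphi. apply Rmult_le_pos; [|left; apply Rinv_0_lt_compat; auto].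
      apply r_pos. intro b. apply Hphi. auto.
    - rewrite <- Etj. field. lra. }
  assert (Hq1 : is_type T n q1) by (apply (tyj true); unfold t; auto; lra).
  assert (Hq2 : is_type T n q2) by (apply (tyj false); unfold t; auto; lra).
  destruct Hp as [_ Hext].
  assert (Hdec : forall phi, p phi = t * q1 phi + (1 - t) * q2 phi).
  { intro phi. unfold q1, q2. rewrite <- r_sum. field. lra. }
  left. intros phi c Hc.
  destruct (Hext q1 q2 t Hq1 Hq2 Ht Hdec phi) as [E1 _].
  rewrite <- E1. unfold q1.
  assert (A := r_conc true phi c Hc). fold t in A.
  apply (Rmult_le_reg_l t); [lra|]. field_simplify; lra.
Qed.

Lemma supp_list (I : Type) (U : I -> (Fin.t n -> M) -> Prop) : forall l,
  supp (fun b => exists i, In i l /\ U i b) p -> exists i, In i l /\ supp (U i) p.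
Proof.
  induction l as [|i l IH]; intros H.
  - destruct (supp_nonempty _ H) as [b [i [[] _]]].
  - assert (H' : supp (fun b => U i b \/ (exists j, In j l /\ U j b)) p).
    { eapply supp_mono; [exact H|]. intros b [j [[<-|Hj] Hu]]; [left; auto|right; eauto]. }
    destruct (split_supp _ _ H') as [H1|H1].
    + exists i. split; [left|]; auto.
    + destruct (IH H1) as [j [Hj Hs]]. exists j. split; [right|]; auto.
Qed.

Lemma main_sec : compact_structure M -> exists a : Fin.t n -> M, realizes M a p.
Proof.
  intros Hc. apply NNPP. intro Hn.
  set (I := {psi : formula L n | p psi = 0}).
  set (U := fun (i : I) b => ev (proj1_sig i) b < -1).
  destruct (Kcompact M Hc n I U) as [l Hl].
  - intros [psi Hpsi] a Ha. unfold U in *; simpl in *.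
    destruct (eval_lip L M n psi) as [C [HC HL]].
    set (g := -1 - ev psi a).
    exists (g / (C + 1)). split. { apply Rdiv_lt_0_compat; unfold g; lra. }
    intros b Hb. assert (A := HL a b (g / (C + 1))).
    assert (A' : Rabs (eval M psi a - eval M psi b) <= C * (g / (C + 1))).
    { apply A. { left. apply Rdiv_lt_0_compat; unfold g; lra. }
      intro j. left. apply Hb. }
    assert (C * (g / (C + 1)) < g).
    { assert (0 < g) by (unfold g; lra).
      apply (Rmult_lt_reg_l (C + 1)); [lra|].
      replace ((C + 1) * (C * (g / (C + 1)))) with (C * g) by (field; lra). nra. }
    apply Rabs_le_between in A'. unfold g, ev in *. lra.
  - intro a. assert (Hna : ~ realizes M a p) by (intro H; apply Hn; eauto).
    unfold realizes in Hna. apply not_all_ex_not in Hna. destruct Hna as [phi Hphi].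
    set (d := eval M phi a - p phi).
    assert (Hd : d <> 0) by (unfold d; intro; apply Hphi; lra).
    set (psi := fscale (-2 / d) (fadd phi (fscale (- p phi) fone))).
    assert (Hpsi : p psi = 0).
    { unfold psi. rewrite (type_scale _ _ _ p_type), (type_add _ _ _ p_type),
        (type_scale _ _ _ p_type), (type_one _ _ _ p_type). ring. }
    exists (exist _ psi Hpsi). unfold U, ev, psi; simpl. fold d.
    replace (-2 / d * (eval M phi a + - p phi * 1)) with (-2) by (unfold d; field; auto).
    lra.
  - assert (Hs : supp (fun b => exists i, In i l /\ U i b) p).
    { intros phi c Hphi. apply p_le. intro b. destruct (Hl b) as [i [Hi Hu]]. apply Hphi. eauto. }
    destruct (supp_list I U l Hs) as [[psi Hpsi] [_ Hsu]].
    assert (p psi <= -1). { apply Hsu. intros b Hb. unfold U in Hb. simpl in Hb. lra. }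
    lra.
Qed.
End MainSec.

Theorem mainTheorem18 :
  forall (L : language) (T : theory L) (M : structure L),
    complete_theory T -> models M T -> compact_structure M ->
    forall (n : nat) (p : formula L n -> R),
      extreme_type T n p ->
      exists a : Fin.t n -> M, realizes M a p.
Proof.
  intros L T M HT HM Hc n p Hp. exact (main_sec L T M HT HM n p Hp Hc).
Qed.
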